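(* Let $X$ be a finite topological space and $A\subseteq X$. Then $rad_X(A)\le rad_X(A^\circ)$ and $rad_X(A)\le rad_X(\overline{A})$, where $A^\circ$ and $\overline{A}$ are the interior and closure of $A$ in $X$.
   Context: For a finite topological space $X$ and $x\in X$, $U_x$ denotes the minimal open set containing $x$. A nested sequence of open sets around $x$ is a finite sequence $U_0\subsetneq U_1\subsetneq\cdots\subsetneq U_m=X$ of open sets with $U_0=U_x$ such that for each $j$ there is no open set $V$ with $U_j\subsetneq V\subsetneq U_{j+1}$. The furtherness function $\Psi:X\times X\to\{0,1,\dots,|X|-1\}$ is defined by: $\Psi(x,y)$ is the smallest integer $k\ge 0$ such that there exists a nested sequence $(U_j)_{j\ge0}$ of open sets around $x$ with $y\in U_k$. For $a\in X$ and $B\subseteq X$, $\Psi(a,B)=\min_{b\in B}\Psi(a,b)$, and for $A,B\subseteq X$, $\Psi(A,B)=\min_{a\in A}\Psi(a,B)$, with the value $\infty$ (larger than every integer) if $A$ or $B$ is empty. $\partial_X(A)$ denotes the boundary of $A$ in $X$. The center of $A$ is $Cent_X(A)=\{a\in A\mid \Psi(a,\partial_X(A))\ge\Psi(b,\partial_X(A))\ \forall b\in A\}$, and the radius is $rad_X(A)=\Psi(Cent_X(A),\partial_X(A))$. *)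

(* Defs.v *)
From mathcomp Require Import all_boot.
From mathcomp Require Import boolp.

Set Implicit Arguments.
Unset Strict Implicit.
Unset Printing Implicit Defensive.

Section FiniteSpaces.
Variable T : finType.

(* Since T is finite, closure under binary unions/intersections is the same
   as closure under arbitrary unions and finite intersections. *)
Definition is_topology (op : {set {set T}}) : Prop :=
  [/\ set0 \in op, [set: T] \in op,
      (forall U V, U \in op -> V \in op -> U :|: V \in op) &
      (forall U V, U \in op -> V \in op -> U :&: V \in op)].

Variable op : {set {set T}}.

Definition interiorT (A : {set T}) : {set T} :=
  \bigcup_(U in op | U \subset A) U.

Definition closureT (A : {set T}) : {set T} :=
  \bigcap_(F : {set T} | (~: F \in op) && (A \subset F)) F.

Definition boundary (A : {set T}) : {set T} := closureT A :\: interiorT A.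

Definition minopen (x : T) : {set T} := \bigcap_(U in op | x \in U) U.

Definition covers (U V : {set T}) : bool :=
  (U \proper V) && [forall W : {set T}, (W \in op) ==> ~~ ((U \proper W) && (W \proper V))].

Definition nested_seq (x : T) (s : seq {set T}) : bool :=
  match s with
  | [::] => false
  | U0 :: t => [&& U0 == minopen x, all (fun U => U \in op) s,
                   path covers U0 t & last U0 t == [set: T]]
  end.

Definition reach (x y : T) (k : nat) : Prop :=
  exists s, nested_seq x s /\ y \in nth set0 s k.

(* Psi x y : the least such k (the existence is a fact about finite spaces;
   the fallback value 0 is never used when op is a topology). *)
Definition Psi (x y : T) : nat :=
  match pselect (exists k, reach x y k) with
  | left H =>
      @ex_minn (fun k => `[< reach x y k >])
        (let: ex_intro k Hk := H in ex_intro _ k (asboolT Hk))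
  | right _ => 0
  end.

End FiniteSpaces.

(* Natural numbers extended with infinity: None = ∞ (larger than every integer). *)
Definition leI (a b : option nat) : bool :=
  match a, b with
  | _, None => true
  | None, Some _ => false
  | Some m, Some n => m <= n
  end.

Definition minI (a b : option nat) : option nat :=
  match a, b with
  | None, _ => b
  | _, None => a
  | Some m, Some n => Some (minn m n)
  end.

Section Radius.
Variables (T : finType) (op : {set {set T}}).

Definition PsiPS (a : T) (B : {set T}) : option nat :=
  \big[minI/None]_(b in B) Some (Psi op a b).

Definition PsiSS (A B : {set T}) : option nat :=
  \big[minI/None]_(a in A) PsiPS a B.

Definition center (A : {set T}) : {set T} :=
  [set a in A | [forall b in A,
     leI (PsiPS b (boundary op A)) (PsiPS a (boundary op A))]].

Definition radius (A : {set T}) : option nat :=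
  PsiSS (center A) (boundary op A).

End Radius.

(* Main.v *)
Require Import Defs.
From mathcomp Require Import all_boot.
From mathcomp Require Import boolp.
From HB Require Import structures.

Set Implicit Arguments.
Unset Strict Implicit.
Unset Printing Implicit Defensive.

Lemma minIA : associative minI.
Proof. by case=> [a|] [b|] [c|] //=; rewrite minnA. Qed.
Lemma minIC : commutative minI.
Proof. by case=> [a|] [b|] //=; rewrite minnC. Qed.
Lemma minI1 : left_id None minI.
Proof. by case. Qed.

HB.instance Definition _ := Monoid.isComLaw.Build (option nat) None minI minIA minIC minI1.

Lemma leI_minl a b : leI (minI a b) a.
Proof. by case: a b => [a|] [b|] //=; rewrite geq_minl. Qed.

Lemma leI_min x a b : leI x a -> leI x b -> leI x (minI a b).
Proof. by case: x a b => [x|] [a|] [b|] //=; rewrite leq_min => -> ->. Qed.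

Lemma leI_trans a b c : leI a b -> leI b c -> leI a c.
Proof. by case: a b c => [a|] [b|] [c|] //=; apply: leq_trans. Qed.

Lemma leI_None x : leI x None.
Proof. by case: x. Qed.

Lemma leI0 x : leI (Some 0) x.
Proof. by case: x. Qed.

Section S.
Variables (T : finType) (op : {set {set T}}).
Hypothesis Hop : is_topology op.

Lemma big_le (B : {set T}) (F : T -> option nat) b : b \in B ->
  leI (\big[minI/None]_(i in B) F i) (F b).
Proof. by move=> bB; rewrite (bigD1 b) //=; apply: leI_minl. Qed.

Lemma big_ge (B : {set T}) (F : T -> option nat) x :
  (forall b, b \in B -> leI x (F b)) -> leI x (\big[minI/None]_(i in B) F i).
Proof.
move=> H; apply: (big_ind (fun y => leI x y)) => //; first exact: leI_None.
exact: leI_min.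
Qed.

Lemma Psi_refl a : Psi op a a = 0.
Proof.
rewrite /Psi; case: pselect => // H.
case: ex_minnP => m Hm Hmin; apply/eqP; rewrite -leqn0; apply: Hmin.
apply: asboolT; move/asboolP: Hm => [s [Hs _]]; exists s; split => //.
case: s Hs => // U0 t /and4P[/eqP -> _ _ _] /=.
by apply/bigcapP => U /andP[].
Qed.

Lemma int_sub (A : {set T}) : interiorT op A \subset A.
Proof. by apply/bigcupsP => U /andP[]. Qed.

Lemma sub_cl (A : {set T}) : A \subset closureT op A.
Proof. by apply/bigcapsP => U /andP[]. Qed.

Lemma int_open (A : {set T}) : interiorT op A \in op.
Proof.
case: Hop => H0 HT HU HI.
by apply: (big_ind (fun U => U \in op)) => // U /andP[].
Qed.

Lemma cl_closed (A : {set T}) : ~: closureT op A \in op.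
Proof.
case: Hop => H0 HT HU HI.
apply: (big_ind (fun U => ~: U \in op)); first by rewrite setCT.
  by move=> U V hU hV; rewrite setCI; apply: HU.
by move=> U /andP[].
Qed.

Lemma int_max (A U : {set T}) : U \in op -> U \subset A -> U \subset interiorT op A.
Proof. by move=> h1 h2; apply: (bigcup_sup U); rewrite h1 h2. Qed.

Lemma cl_min (A F : {set T}) : ~: F \in op -> A \subset F -> closureT op A \subset F.
Proof. by move=> h1 h2; apply: (bigcap_inf F); rewrite h1 h2. Qed.

Lemma int_int (A : {set T}) : interiorT op (interiorT op A) = interiorT op A.
Proof. by apply/eqP; rewrite eqEsubset int_sub int_max ?int_open. Qed.

Lemma cl_cl (A : {set T}) : closureT op (closureT op A) = closureT op A.
Proof. by apply/eqP; rewrite eqEsubset sub_cl cl_min ?cl_closed. Qed.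

Lemma bd0 : boundary op set0 = set0.
Proof.
apply/eqP; rewrite -subset0 /boundary; apply: subset_trans (subsetDl _ _) _.
apply: cl_min => //; rewrite setC0; by case: Hop.
Qed.

Lemma center_ex (A : {set T}) a0 : a0 \in A -> exists a, a \in center op A.
Proof.
move=> a0A; set f := fun a => PsiPS op a (boundary op A).
case: (pickP [pred a in A | f a == None]) => [a /andP[aA /eqP fa] | H].
  exists a; rewrite inE aA /=; apply/forallP => b; apply/implyP => _.
  by rewrite -/(f b) -/(f a) fa leI_None.
case: (arg_maxnP (fun a => odflt 0 (f a)) a0A) => a aA Hm; have {}aA : a \in A := aA.
exists a; rewrite inE aA /=; apply/forallP => b; apply/implyP => bA.
rewrite -/(f b) -/(f a); have := Hm b bA.
have Ha : f a != None by apply/eqP => e; have := H a; rewrite /= e eqxx andbT aA.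
have Hb : f b != None by apply/eqP => e; have := H b; rewrite /= e eqxx andbT bA.
by move: Ha Hb; case: (f a) => // n _; case: (f b).
Qed.

Lemma gen (A B : {set T}) :
  boundary op B \subset boundary op A ->
  A \subset boundary op A :|: B ->
  (A = set0 -> boundary op A = set0) ->
  leI (radius op A) (radius op B).
Proof.
move=> hBA hA h0.
case: (set_0Vmem A) => [A0 | [a0 a0A]].
  have hb: boundary op B = set0.
    by apply/eqP; rewrite -subset0 -(h0 A0) hBA.
  rewrite /radius /PsiSS /PsiPS hb.
  rewrite [X in leI _ X]big1 ?leI_None // => c _; by rewrite big_set0.
have [a aC] := center_ex a0A.
apply: (leI_trans (big_le _ aC)).
have aA : a \in A by move: aC; rewrite inE => /andP[].
move/subsetP: hA => /(_ a aA); rewrite inE => /orP[ab|aB].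
  apply: leI_trans (leI0 _); apply: leI_trans (big_le _ ab) _.
  by rewrite Psi_refl.
apply: (@leI_trans _ (PsiPS op a (boundary op B))).
  apply: big_ge => b bB; apply: big_le; exact: (subsetP hBA).
apply: big_ge => c; rewrite inE => /andP[_ /forallP /(_ a)].
by rewrite aB.
Qed.

End S.

Theorem mainTheorem20 (T : finType) (op : {set {set T}})
  (Hop : is_topology op) (A : {set T}) :
  leI (radius op A) (radius op (interiorT op A)) /\
  leI (radius op A) (radius op (closureT op A)).
Proof.
have hA0 : A = set0 -> boundary op A = set0 by move=> ->; apply: (bd0 Hop).
have hAsub : A \subset boundary op A :|: interiorT op A.
  apply/subsetP => a aA; rewrite /boundary !inE.
  case: (boolP (a \in interiorT op A)) => //= _; rewrite ?orbF.
  by rewrite (subsetP (sub_cl op A)).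
split; apply: gen => //.
- rewrite /boundary (int_int Hop); apply: setSD.
  apply: cl_min; first exact: (cl_closed Hop).
  exact: subset_trans (int_sub op A) (sub_cl op A).
- rewrite /boundary (cl_cl Hop); apply: setDS.
  by apply: int_max; [apply: (@int_open _ _ Hop) | apply: subset_trans (int_sub op A) (sub_cl op A)].
- apply: subset_trans hAsub _; apply: setUS; exact: subset_trans (int_sub op A) (sub_cl op A).
Qed.
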